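(* Let $h>0$, $\lambda\in[0,1)$, let $\mu\in\mathcal{M}^+(h,\lambda)$, and let $g:\mathbb{R}\to[0,\infty)$ be non-decreasing with $g(0)=0$. Then $\int g^2\,d\mu\le\left(\frac{2}{1-\lambda}\right)^2\int (g(x)-g(x-h))^2\,d\mu(x).$
   Context: $\mathcal{M}^+(h,\lambda)$ denotes the class of Borel probability measures $\mu$ supported on $[0,\infty)$ such that $\mu([x+h,\infty))\le\lambda\,\mu([x,\infty))$ for all $x\ge0$. *)

(* Defs.v *)
From HB Require Import structures.
From mathcomp Require Import all_boot all_order all_algebra.
From mathcomp Require Import all_classical all_reals all_analysis.
Set Implicit Arguments. Unset Strict Implicit. Unset Printing Implicit Defensive.
Import Order.TTheory GRing.Theory Num.Theory.
Local Open Scope classical_set_scope.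
Local Open Scope ring_scope.

Definition Mplus (R : realType) (h lambda : R) (mu : probability R R) : Prop :=
  mu `[0, +oo[%classic = 1%E /\
  forall x : R, 0 <= x ->
    (mu `[(x + h)%R, +oo[%classic <= lambda%:E * mu `[x, +oo[%classic)%E.

(* Main.v *)
Require Import Defs.
From HB Require Import structures.
From mathcomp Require Import all_boot all_order all_algebra.
From mathcomp Require Import all_classical all_reals all_analysis.
From mathcomp Require Import measurable_realfun.
From mathcomp Require Import ring lra.
Import Order.TTheory GRing.Theory Num.Theory.
Local Open Scope classical_set_scope.
Local Open Scope ring_scope.
Section S.
Context (R : realType) (mu : probability R R).
Local Open Scope ereal_scope.
Lemma layer (f : R -> R) : measurable_fun setT f -> (forall x, (0 <= f x)%R) ->
  \int[mu]_x (f x)%:E =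
  \int[lebesgue_measure]_(r in `[0%R, +oo[) mu (f @^-1` `]r, +oo[%classic).
Proof.
move=> mf f0.
pose X : {RV mu >-> R} := mfun_Sub (mem_set mf).
have := @ge0_expectation_ccdf _ _ _ mu X f0.
by rewrite expectation_def.
Qed.
Lemma layer_meas (f : R -> R) : measurable_fun setT f ->
  measurable_fun [set: R] (fun r : R => (mu (f @^-1` `]r, +oo[%classic) : \bar R)).
Proof.
move=> mf.
pose X : {RV mu >-> R} := mfun_Sub (mem_set mf).
exact: (@ccdf_measurable _ _ _ mu X).
Qed.
Lemma shift_set (h lam : R) (phi : R -> R) : (0 < h)%R -> (0 <= lam)%R ->
  Mplus h lam mu -> {homo phi : x y / (x <= y)%R} ->
  (forall x, (x <= 0)%R -> phi x = 0%R) -> forall r : R, (0 <= r)%R ->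
  mu ((fun x : R => phi (x - h)%R) @^-1` `]r, +oo[%classic)
    <= lam%:E * mu (phi @^-1` `]r, +oo[%classic).
Proof.
move=> h0 lam0 [_ Hmu] phind phi0 r r0.
have mphi : measurable_fun setT phi by exact: nondecreasing_measurable.
have mphih : measurable_fun setT (fun x : R => phi (x - h)%R).
  apply: nondecreasing_measurable => // x y xy; apply: phind; by rewrite lerD2r.
set U := phi @^-1` _.
set V := (fun x => _) @^-1` _.
have mU : measurable U by rewrite -[U]setTI; apply: mphi => //; exact: measurable_itv.
have mV : measurable V by rewrite -[V]setTI; apply: mphih => //; exact: measurable_itv.
have UE x : U x = (r < phi x)%R by rewrite /U /= in_itv /= andbT.
have VE x : V x = U (x - h)%R by rewrite /V /U /= .
have Upos x : U x -> (0 < x)%R.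
  rewrite UE => rx; rewrite ltNge; apply/negP => /phi0 px.
  by move: rx; rewrite px ltNge r0.
have Uup x y : U x -> (x <= y)%R -> U y.
  by rewrite !UE => rx /phind xy; exact: lt_le_trans rx xy.
have [Une|Ue] := pselect (exists u, U u); last first.
  have -> : V = set0.
    by apply/seteqP; split => // y; rewrite VE => Uy; apply: Ue; exists (y - h)%R.
  by rewrite measure0 mule_ge0.
have lbU : has_lbound U by exists 0%R => x /Upos /ltW.
have infU : has_inf U by split.
set a := inf U.
have a0 : (0 <= a)%R by apply: lb_le_inf => // x /Upos /ltW.
have aU x : U x -> (a <= x)%R by move=> Ux; exact: ge_inf.
have above x : (a < x)%R -> U x.
  move=> ax; have ep : (0 < x - a)%R by rewrite subr_gt0.
  have [e Ue ex] := inf_adherent ep infU.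
  by apply: (Uup e) => //; apply: ltW; move: ex; rewrite addrC subrK.
have itvU b : (a < b)%R -> `[b, +oo[%classic `<=` U.
  move=> ab x /=; rewrite in_itv /= andbT => bx; apply: above.
  exact: lt_le_trans ab bx.
have [Ua|Ua] := pselect (U a).
  apply: (@le_trans _ _ (mu `[(a + h)%R, +oo[%classic)).
    apply: (le_measure _ (mem_set mV) (mem_set (measurable_itv _))).
    by move=> y; rewrite VE /= in_itv /= andbT => /aU; rewrite lerBrDr.
  apply: (le_trans (Hmu _ a0)); apply: lee_wpmul2l; first by rewrite lee_fin.
  apply: (le_measure _ (mem_set (measurable_itv _)) (mem_set mU)).
  by move=> x /=; rewrite in_itv /= andbT => ax; exact: Uup Ua ax.
pose W (n : nat) := `[(a + n.+1%:R^-1 + h)%R, +oo[%classic.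
have mW n : measurable (W n) by exact: measurable_itv.
have VW : V `<=` \bigcup_n W n.
  move=> y; rewrite VE => Uy.
  have ay : (a < y - h)%R.
    by rewrite lt_neqAle aU // andbT; apply/eqP => ay; apply: Ua; rewrite ay.
  have [k hk] := ltr_add_invr ay.
  by exists k => //; rewrite /W /= in_itv /= andbT -lerBrDr ltW.
have ndW : nondecreasing_seq W.
  move=> n m nm; apply/subsetPset => x; rewrite /W /= !in_itv /= !andbT.
  apply: le_trans; rewrite lerD2r lerD2l lef_pV2 ?posrE ?ltr0n // ler_nat.
  by [].
have Wle n : mu (W n) <= lam%:E * mu U.
  apply: (le_trans (Hmu _ _)).
    by rewrite addr_ge0 // invr_ge0 ler0n.
  apply: lee_wpmul2l; first by rewrite lee_fin.
  apply: (le_measure _ (mem_set (measurable_itv _)) (mem_set mU)).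
  by apply: itvU; rewrite ltrDl invr_gt0 ltr0n.
apply: (@le_trans _ _ (mu (\bigcup_n W n))).
  by apply: le_measure VW; rewrite inE //; exact: bigcupT_measurable.
have mbW : measurable (\bigcup_n W n) by exact: bigcupT_measurable.
have Hc := nondecreasing_cvg_mu (mu:=mu) mW mbW ndW.
apply: (cvge_to_le Hc).
exact: nearW.
Qed.

Lemma shift_int (h lam : R) (phi : R -> R) : (0 < h)%R -> (0 <= lam)%R ->
  Mplus h lam mu -> {homo phi : x y / (x <= y)%R} ->
  (forall x, (x <= 0)%R -> phi x = 0%R) -> (forall x, (0 <= phi x)%R) ->
  \int[mu]_x (phi (x - h)%R)%:E <= lam%:E * \int[mu]_x (phi x)%:E.
Proof.
move=> h0 lam0 Mp phind phi0 phipos.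
have mphi : measurable_fun setT phi by exact: nondecreasing_measurable.
have mphih : measurable_fun setT (fun x : R => phi (x - h)%R).
  apply: nondecreasing_measurable => // x y xy; apply: phind; by rewrite lerD2r.
rewrite (layer _ mphi phipos) (layer _ mphih (fun x => phipos _)).
rewrite -ge0_integralZl_EFin //; last exact: measurable_funTS (layer_meas _ mphi).
apply: ge0_le_integral => //.
- exact: measurable_funTS (layer_meas _ mphih).
- apply: measurable_funeM; exact: measurable_funTS (layer_meas _ mphi).
move=> r; rewrite /= in_itv /= andbT => r0.
by apply: shift_set.
Qed.

Lemma pointwise (lam a b : R) : (0 <= lam < 1)%R -> (0 <= b)%R -> (b <= a)%R ->
  (a ^+ 2 <= b ^+ 2 + ((1 - lam) / 2) * a ^+ 2 + (2 / (1 - lam)) * (a - b) ^+ 2)%R.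
Proof.
move=> /andP[l0 l1] b0 ba.
set e := ((1 - lam) / 2)%R; set c := (2 / (1 - lam))%R.
have e0 : (0 < e)%R by rewrite divr_gt0 // subr_gt0.
have c0 : (0 < c)%R by rewrite divr_gt0 // subr_gt0.
have ec : (e * c = 1)%R.
  by rewrite /e /c mulrA divfK ?mulfV // ?subr_eq0 ?gt_eqF // pnatr_eq0.
have h1 : (0 <= c * (e * a - (a - b)) ^+ 2)%R by rewrite mulr_ge0 // ?sqr_ge0 ?ltW.
have h2 : (c * (e * a - (a - b)) ^+ 2 = e * a ^+ 2 - 2 * a * (a - b) + c * (a - b) ^+ 2)%R.
  apply/eqP; rewrite -subr_eq0; apply/eqP.
  transitivity ((e * c - 1) * (e * a ^+ 2 - 2 * a * (a - b)))%R; first by ring.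
  by rewrite ec subrr mul0r.
nra.
Qed.

Lemma core (h lam M : R) (G : R -> R) : (0 < h)%R -> (0 <= lam)%R -> (lam < 1)%R ->
  Mplus h lam mu -> (forall x, (0 <= G x)%R) -> {homo G : x y / (x <= y)%R} ->
  (forall x, (x <= 0)%R -> G x = 0%R) -> (forall x, (G x <= M)%R) ->
  \int[mu]_x (G x ^+ 2)%:E <=
     ((2 / (1 - lam)) ^+ 2)%:E * \int[mu]_x ((G x - G (x - h)) ^+ 2)%:E.
Proof.
move=> h0 l0 l1 Mp G0 Gnd G00 GM.
set e := ((1 - lam) / 2)%R; set c := (2 / (1 - lam))%R.
have e0 : (0 < e)%R by rewrite divr_gt0 // subr_gt0.
have c0 : (0 < c)%R by rewrite divr_gt0 // subr_gt0.
have ec : (e * c = 1)%R.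
  by rewrite /e /c mulrA divfK ?mulfV // ?subr_eq0 ?gt_eqF // pnatr_eq0.
have mG : measurable_fun setT G by exact: nondecreasing_measurable.
have mGh : measurable_fun setT (fun x : R => G (x - h)%R).
  apply: nondecreasing_measurable => // x y xy; apply: Gnd; by rewrite lerD2r.
have mG2 : measurable_fun setT (fun x : R => (G x ^+ 2)%:E).
  by apply/measurable_EFinP; exact: measurable_funX.
have mGh2 : measurable_fun setT (fun x : R => (G (x - h) ^+ 2)%:E).
  by apply/measurable_EFinP; exact: measurable_funX.
have mD2 : measurable_fun setT (fun x : R => ((G x - G (x - h)) ^+ 2)%:E).
  by apply/measurable_EFinP; apply: measurable_funX; exact: measurable_funB.
set I := \int[mu]_x (G x ^+ 2)%:E.
set J := \int[mu]_x ((G x - G (x - h)) ^+ 2)%:E.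
have I0 : 0 <= I by apply: integral_ge0 => x _; rewrite lee_fin sqr_ge0.
have J0 : 0 <= J by apply: integral_ge0 => x _; rewrite lee_fin sqr_ge0.
have Ifin : I \is a fin_num.
  rewrite ge0_fin_numE //; apply: (@le_lt_trans _ _ (\int[mu]_x (cst (M ^+ 2)%:E) x)).
    apply: ge0_le_integral => //; first by move=> x _; rewrite lee_fin sqr_ge0.
    by move=> x _; rewrite lee_fin /= !expr2 ler_pM.
  by rewrite integral_cst // -ge0_fin_numE ?fin_numM // ?fin_num_measure // mule_ge0 // lee_fin sqr_ge0.
have step1 : I <= \int[mu]_x (G (x - h) ^+ 2)%:E + e%:E * I + c%:E * J.
  have sg x : 0 <= (G x ^+ 2)%:E by rewrite lee_fin sqr_ge0.
  have sgh x : 0 <= (G (x - h) ^+ 2)%:E by rewrite lee_fin sqr_ge0.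
  have sd x : 0 <= ((G x - G (x - h)) ^+ 2)%:E by rewrite lee_fin sqr_ge0.
  have se x : 0 <= e%:E * (G x ^+ 2)%:E by rewrite mule_ge0 // lee_fin ltW.
  have sc x : 0 <= c%:E * ((G x - G (x - h)) ^+ 2)%:E by rewrite mule_ge0 // lee_fin ltW.
  have me : measurable_fun setT (fun x => e%:E * (G x ^+ 2)%:E) by exact: measurable_funeM.
  have mc : measurable_fun setT (fun x => c%:E * ((G x - G (x - h)) ^+ 2)%:E) by exact: measurable_funeM.
  have m1 : measurable_fun setT (fun x : R => (G (x - h) ^+ 2)%:E + e%:E * (G x ^+ 2)%:E) by exact: emeasurable_funD.
  apply: (@le_trans _ _ (\int[mu]_x ((G (x - h) ^+ 2)%:E + e%:E * (G x ^+ 2)%:E + c%:E * ((G x - G (x - h)) ^+ 2)%:E))).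
    apply: ge0_le_integral => //; first exact: emeasurable_funD.
    move=> x _; rewrite -!EFinM -!EFinD lee_fin.
    apply: pointwise; first by rewrite l0 l1.
      exact: G0.
    by apply: Gnd; rewrite lerBlDr lerDl ltW.
  rewrite ge0_integralD //; last by move=> x _; rewrite adde_ge0.
  rewrite ge0_integralD //.
  rewrite ge0_integralZl_EFin ?(ltW e0) //.
  by rewrite ge0_integralZl_EFin ?(ltW c0) //.
have step2 : \int[mu]_x (G (x - h) ^+ 2)%:E <= lam%:E * I.
  apply: (@shift_int _ _ (fun x => G x ^+ 2)%R) => //.
  - by move=> x y xy; rewrite !expr2 ler_pM ?Gnd.
  - by move=> x x0; rewrite G00 // expr0n.
  - by move=> x; rewrite sqr_ge0.
have key : I <= lam%:E * I + e%:E * I + c%:E * J.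
  by apply: (le_trans step1); rewrite leeD2r // leeD2r.
have [Jy|Jfin] := eqVneq J +oo.
  by rewrite Jy gt0_muley ?leey // lte_fin exprn_gt0.
have Jf : J \is a fin_num by rewrite ge0_fin_numE // ltNge leye_eq.
move: key; rewrite -(fineK Ifin) -(fineK Jf) -!EFinM -!EFinD !lee_fin.
set i := fine I; set j := fine J => key.
have i0 : (0 <= i)%R by rewrite fine_ge0.
have j0 : (0 <= j)%R by rewrite fine_ge0.
have el : (1 - lam = 2 * e)%R by rewrite /e mulrC divfK // pnatr_eq0.
have H1 : (e * i <= c * j)%R.
  by move: key; rewrite -lerBlDr; nra.
have -> : (c ^+ 2 * j = c * (c * j))%R by rewrite expr2 mulrA.
apply: (le_trans _ (ler_wpM2l (ltW c0) H1)).
by rewrite mulrA [(c * e)%R]mulrC ec mul1r.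
Qed.
End S.

Theorem lemma2p1 (R : realType) (h lambda : R) (mu : probability R R)
    (g : R -> R) :
  0 < h -> 0 <= lambda -> lambda < 1 ->
  Mplus h lambda mu ->
  (forall x, 0 <= g x) -> {homo g : x y / x <= y} -> g 0 = 0 ->
  (\int[mu]_x (g x ^+ 2)%:E <=
     ((2 / (1 - lambda)) ^+ 2)%:E * \int[mu]_x ((g x - g (x - h)) ^+ 2)%:E)%E.
Proof.
move=> h0 l0 l1 Mp g0 gnd g00.
have gneg x : x <= 0 -> g x = 0.
  by move=> x0; apply/le_anti; rewrite g0 andbT -g00 gnd.
set c := (2 / (1 - lambda)).
have c0 : 0 < c by rewrite divr_gt0 // subr_gt0.
pose G (n : nat) x := Num.min (g x) n%:R.
have G0 n x : 0 <= G n x by rewrite /G le_min g0 ler0n.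
have Gnd n : {homo G n : x y / x <= y}.
  by move=> x y xy; rewrite /G le_min !ge_min gnd // lexx orbT.
have G00 n x : x <= 0 -> G n x = 0.
  by move=> x0; rewrite /G gneg // min_l.
have GM n x : G n x <= n%:R by rewrite /G ge_min lexx orbT.
have mg : measurable_fun setT g by exact: nondecreasing_measurable.
have mgh : measurable_fun setT (fun x : R => g (x - h)).
  apply: nondecreasing_measurable => // x y xy; apply: gnd; by rewrite lerD2r.
have mD2 : measurable_fun setT (fun x : R => ((g x - g (x - h)) ^+ 2)%:E).
  by apply/measurable_EFinP; apply: measurable_funX; exact: measurable_funB.
set J := (\int[mu]_x ((g x - g (x - h)) ^+ 2)%:E)%E.
have bound n : (\int[mu]_x (G n x ^+ 2)%:E <= (c ^+ 2)%:E * J)%E.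
  apply: le_trans; first by apply: core; [exact: h0|exact: l0|exact: l1|exact: Mp|exact: G0|exact: Gnd|exact: G00|exact: GM].
  apply: lee_wpmul2l; first by rewrite lee_fin exprn_ge0 // ltW.
  apply: ge0_le_integral => //.
  - by move=> x _; rewrite lee_fin sqr_ge0.
  - have mG : measurable_fun setT (G n) by exact: nondecreasing_measurable.
    have mGh : measurable_fun setT (fun x : R => G n (x - h)).
      apply: nondecreasing_measurable => // x y xy; apply: Gnd; by rewrite lerD2r.
    by apply/measurable_EFinP; apply: measurable_funX; exact: measurable_funB.
  move=> x _; rewrite lee_fin.
  have ba : g (x - h) <= g x by apply: gnd; rewrite lerBlDr lerDl ltW.
  have d0 : 0 <= G n x - G n (x - h).
    by rewrite subr_ge0; apply: Gnd; rewrite lerBlDr lerDl ltW.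
  have d1 : G n x - G n (x - h) <= g x - g (x - h).
    rewrite /G; have [an|na] := leP (g x) n%:R; have [bn|nb] := leP (g (x - h)) n%:R.
    - exact: lexx.
    - lra.
    - lra.
    - lra.
  by rewrite !expr2 ler_pM.
have mG n : measurable_fun setT (G n) by exact: nondecreasing_measurable.
pose g' (n : nat) (x : R) := ((G n x) ^+ 2)%:E.
have mg' n : measurable_fun setT (g' n).
  by apply/measurable_EFinP; exact: measurable_funX.
have g'0 n x : setT x -> (0 <= g' n x)%E by move=> _; rewrite lee_fin sqr_ge0.
have nd_g' x : setT x -> nondecreasing_seq (g'^~ x).
  move=> _ m n mn; rewrite /g' lee_fin !expr2 ler_pM //.
    by rewrite /G le_min !ge_min lexx ler_nat mn !orbT.
  by rewrite /G le_min !ge_min lexx ler_nat mn !orbT.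
have HM := cvg_monotone_convergence (mu:=mu) measurableT mg' g'0 nd_g'.
have lim_g' x : limn (g'^~ x) = ((g x) ^+ 2)%:E.
  apply: cvg_lim => //; apply: cvg_near_cst.
  exists (Num.truncn (g x)).+1 => // n /= Hn.
  rewrite /g' /G min_l //.
  apply: ltW; apply: (lt_le_trans (truncnS_gt _)).
  by rewrite ler_nat.
have E : (\int[mu]_x limn (g'^~ x) = \int[mu]_x (g x ^+ 2)%:E)%E.
  by apply: eq_integral => x _; exact: lim_g'.
rewrite E in HM.
apply: (cvge_to_le HM).
exact: nearW.
Qed.
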